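(* Elements $g,h\in B_3$ are conjugate in $B_3$ if and only if $\phi(g)$ and $\phi(h)$ are conjugate in $\mathrm{SL}_2(\mathbb{Z})$ and $\epsilon(g)=\epsilon(h)$.
   Context: $B_3=\langle\sigma_1,\sigma_2:\sigma_1\sigma_2\sigma_1=\sigma_2\sigma_1\sigma_2\rangle$ is the braid group on three strands. The homomorphism $\phi:B_3\to\mathrm{SL}_2(\mathbb{Z})$ is defined by $\phi(\sigma_1)=\begin{bmatrix}1&1\\0&1\end{bmatrix}$ and $\phi(\sigma_2)=\begin{bmatrix}1&0\\-1&1\end{bmatrix}$. The map $\epsilon:B_3\to\mathbb{Z}$ is the abelianization homomorphism with $\epsilon(\sigma_1)=\epsilon(\sigma_2)=1$ (the exponent sum). *)

(* Defs.v *)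
(* B_3 given by its presentation: words in sigma_1^{+-1},
   sigma_2^{+-1} modulo the congruence generated by free cancellation and the
   braid relation sigma1 sigma2 sigma1 = sigma2 sigma1 sigma2. *)
From mathcomp Require Import all_boot all_order all_algebra.
Set Implicit Arguments. Unset Strict Implicit. Unset Printing Implicit Defensive.
Import GRing.Theory Num.Theory.
Local Open Scope ring_scope.

(* a letter: (generator, sign); generator false = sigma_1, true = sigma_2;
   sign true = positive exponent, false = inverse *)
Definition letter := (bool * bool)%type.
Definition word := seq letter.

Definition s1 : letter := (false, true).
Definition s2 : letter := (true, true).
Definition letter_inv (l : letter) : letter := (l.1, ~~ l.2).
Definition word_inv (w : word) : word := rev (map letter_inv w).

Inductive braid_rel : word -> word -> Prop :=
  | rel_cancel l : braid_rel [:: l; letter_inv l] [::]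
  | rel_braid : braid_rel [:: s1; s2; s1] [:: s2; s1; s2].

Inductive braid_eq : word -> word -> Prop :=
  | beq_refl w : braid_eq w w
  | beq_sym u v : braid_eq u v -> braid_eq v u
  | beq_trans u v w : braid_eq u v -> braid_eq v w -> braid_eq u w
  | beq_ctx a b x y : braid_rel x y -> braid_eq (a ++ x ++ b) (a ++ y ++ b).

Definition braid_conj (g h : word) : Prop :=
  exists w : word, braid_eq (w ++ g ++ word_inv w) h.

Definition mx2 (a b c d : int) : 'M[int]_2 :=
  \matrix_(i < 2, j < 2)
    if (i == 0 :> nat) then (if (j == 0 :> nat) then a else b)
    else (if (j == 0 :> nat) then c else d).

Definition phi_letter (l : letter) : 'M[int]_2 :=
  match l with
  | (false, true) => mx2 1 1 0 1
  | (false, false) => mx2 1 (-1) 0 1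
  | (true, true) => mx2 1 0 (-1) 1
  | (true, false) => mx2 1 0 1 1
  end.

Definition phi (w : word) : 'M[int]_2 := foldr (fun l M => phi_letter l *m M) 1%:M w.

Definition eps (w : word) : int := \sum_(l <- w) (if l.2 then 1 else -1).

Definition SL2Z_conj (A B : 'M[int]_2) : Prop :=
  exists P : 'M[int]_2, \det P = 1 /\ P *m A = B *m P.

(* Main.v *)
Require Import Defs.
From mathcomp Require Import all_boot all_order all_algebra.
From mathcomp Require Import zify.
From Stdlib Require Import Setoid Morphisms.
Import GRing.Theory Num.Theory.
Local Open Scope ring_scope.

Lemma det2 (a b c d : int) : \det (mx2 a b c d) = a * d - b * c.
Proof.
rewrite (expand_det_row _ ord0) !big_ord_recl big_ord0 /cofactor !mxE /=.
by rewrite !det_mx11 !mxE /= /bump /= expr0 expr1 mul1r mulN1r addr0 mulrN.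
Qed.

#[local] Hint Resolve beq_refl : core.
Instance beq_equiv : Equivalence braid_eq.
Proof. split; [exact: beq_refl | exact: beq_sym | exact: beq_trans]. Qed.

Lemma beq_congr a b {u v} : braid_eq u v -> braid_eq (a ++ u ++ b) (a ++ v ++ b).
Proof.
elim=> [w|u' v' _ IH|u' v' w _ IH1 _ IH2|a' b' x y r].
- reflexivity.
- by symmetry.
- by transitivity (a ++ v' ++ b).
- have := beq_ctx (a ++ a') (b' ++ b) r. by rewrite -!catA.
Qed.

Instance cat_proper : Proper (braid_eq ==> braid_eq ==> braid_eq) cat.
Proof.
move=> u u' Hu v v' Hv.
transitivity (u' ++ v).
- have := beq_congr [::] v Hu. by [].
- have := beq_congr u' [::] Hv. by rewrite !cats0.
Qed.

Instance cons_proper : Proper (eq ==> braid_eq ==> braid_eq) cons.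
Proof. move=> l l' <- v v' Hv. have := beq_congr [:: l] [::] Hv. by rewrite !cats0. Qed.

Lemma linvK l : letter_inv (letter_inv l) = l.
Proof. by case: l => g s; rewrite /letter_inv /= negbK. Qed.

Lemma canc l : braid_eq [:: l; letter_inv l] [::].
Proof. have := beq_ctx [::] [::] (rel_cancel l). by []. Qed.
Lemma canc' l : braid_eq [:: letter_inv l; l] [::].
Proof. have := canc (letter_inv l). by rewrite linvK. Qed.

Lemma word_inv_cons l w : word_inv (l :: w) = word_inv w ++ [:: letter_inv l].
Proof. by rewrite /word_inv /= rev_cons cats1. Qed.
Lemma word_inv_cat u v : word_inv (u ++ v) = word_inv v ++ word_inv u.
Proof. by rewrite /word_inv map_cat rev_cat. Qed.
Lemma word_invK w : word_inv (word_inv w) = w.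
Proof. rewrite /word_inv map_rev revK -map_comp. elim: w => //= l w ->. by rewrite linvK. Qed.

Lemma wcanc w : braid_eq (w ++ word_inv w) [::].
Proof.
elim: w => [|l w IH]; first by reflexivity.
rewrite word_inv_cons.
have -> : (l :: w) ++ (word_inv w ++ [:: letter_inv l]) = [:: l] ++ (w ++ word_inv w) ++ [:: letter_inv l] by rewrite /= catA.
rewrite IH /=. exact: canc.
Qed.

Lemma wcanc' w : braid_eq (word_inv w ++ w) [::].
Proof. have := wcanc (word_inv w). by rewrite word_invK. Qed.

Lemma winv_eq {u v} : braid_eq u v -> braid_eq (word_inv u) (word_inv v).
Proof.
move=> H.
transitivity (word_inv u ++ (v ++ word_inv v)); first by rewrite wcanc cats0.
rewrite -{1}H catA wcanc'. reflexivity.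
Qed.

Lemma comm_inv {x y A} : braid_eq (x ++ A) (A ++ y) ->
  braid_eq (word_inv A ++ x) (y ++ word_inv A).
Proof.
move=> H.
transitivity (word_inv A ++ (x ++ A) ++ word_inv A).
  by rewrite -catA wcanc cats0.
rewrite H -catA catA wcanc' . reflexivity.
Qed.

Definition D : word := [:: s1; s2; s1].
Definition Dinv : word := word_inv D.
Definition swap (l : letter) : letter := (~~ l.1, l.2).
Definition swapn (b : bool) l := if b then swap l else l.
Lemma swapK l : swap (swap l) = l.
Proof. by case: l => [g s]; rewrite /swap /= negbK. Qed.

Lemma swap_pos (l : letter) : l.2 -> braid_eq (l :: D) (D ++ [:: swap l]).
Proof.
case: l => g s; case: g; case: s => //= _.
- exact: (beq_sym (beq_ctx [::] [:: s1] rel_braid)).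
- exact: (beq_ctx [:: s1] [::] rel_braid).
Qed.

Lemma swap_D (l : letter) : braid_eq (l :: D) (D ++ [:: swap l]).
Proof.
case Hl: (l.2); first exact: swap_pos.
set l0 := letter_inv l.
have H0 : l0.2 by rewrite /l0 /= Hl.
have := winv_eq (swap_pos l0 H0 : braid_eq ([:: l0] ++ D) (D ++ [:: swap l0])).
rewrite !word_inv_cat.
have -> : word_inv [:: l0] = [:: l] by rewrite /word_inv /= /l0 linvK.
have -> : word_inv [:: swap l0] = [:: swap l].
  by rewrite /l0; case: (l) => g s; rewrite /word_inv /letter_inv /swap /= negbK.
move=> H. have := comm_inv (beq_sym H). rewrite word_invK. move=> H'. symmetry. exact: H'.
Qed.

Lemma swap_Dinv (l : letter) : braid_eq (l :: Dinv) (Dinv ++ [:: swap l]).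
Proof.
have := comm_inv (swap_D (swap l) : braid_eq ([:: swap l] ++ D) (D ++ [:: swap (swap l)])). rewrite swapK => H. symmetry. exact: H.
Qed.

Definition dpw (A : word) (n : nat) := flatten (nseq n A).
Definition Dpow (m : int) := match m with Posz n => dpw D n | Negz n => dpw Dinv n.+1 end.
Definition par (m : int) := match m with Posz n => odd n | Negz n => odd n.+1 end.

Lemma dpw_r A n : dpw A n.+1 = dpw A n ++ A.
Proof. rewrite /dpw. elim: n => [|n IH] /=; first by rewrite cats0. move: IH => /= IH. by rewrite {1}IH catA. Qed.

Lemma dpw_swap A (HA : forall l, braid_eq (l :: A) (A ++ [:: swap l])) n l U :
  braid_eq (l :: dpw A n ++ U) (dpw A n ++ swapn (odd n) l :: U).
Proof.
elim: n l => [|n IH] l; first by reflexivity.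
rewrite /dpw /= -/(dpw A n).
rewrite -!catA -cat_cons HA -catA /= IH.
by case: (odd n); rewrite /swapn ?swapK; reflexivity.
Qed.

Lemma Dpow_swap m l U : braid_eq (l :: Dpow m ++ U) (Dpow m ++ swapn (par m) l :: U).
Proof. case: m => n. exact (dpw_swap _ swap_D n l U). exact (dpw_swap _ swap_Dinv n.+1 l U). Qed.

Lemma Dpow_succ m : braid_eq (Dpow (m + 1)) (Dpow m ++ D).
Proof.
case: m => n.
- have -> : (Posz n + 1) = Posz n.+1 by lia.
  change (braid_eq (dpw D n.+1) (dpw D n ++ D)). rewrite dpw_r. reflexivity.
- case: n => [|n].
  + have -> : (Negz 0 + 1) = 0 by [].
    exact (beq_sym (wcanc' D)).
  + have -> : (Negz n.+1 + 1) = Negz n by lia.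
    change (braid_eq (dpw Dinv n.+1) (dpw Dinv n.+2 ++ D)).
    rewrite [dpw Dinv n.+2]dpw_r -catA wcanc' cats0. reflexivity.
Qed.

Lemma Dpow_pred m : braid_eq (Dpow (m - 1)) (Dpow m ++ Dinv).
Proof.
have := Dpow_succ (m - 1). rewrite subrK => ->.
rewrite -catA wcanc cats0. reflexivity.
Qed.

Definition typ (l : letter) : bool := l.1 == l.2.
Definition act0 (l : letter) (U : word) : int * word :=
  match U with
  | [::] => (0, [:: l])
  | h :: U' => if l == letter_inv h then (0, U')
               else if typ l == typ h then (0, l :: U)
               else ((if l.2 then 1 else -1), letter_inv l :: U')
  end.
Definition act (l : letter) (p : int * word) : int * word :=
  let q := act0 (swapn (par p.1) l) p.2 in (p.1 + q.1, q.2).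
Definition nf (w : word) := foldr act (0, [::]) w.
Definition ev (p : int * word) := Dpow p.1 ++ p.2.

Lemma c1 : braid_eq [:: (false,false); (true,false)] [:: (false,false); (true,false); (false,false); (false,true)].
Proof. exact (beq_sym (beq_ctx [:: (false,false); (true,false)] [::] (rel_cancel (false,false)))). Qed.
Lemma c2 : braid_eq [:: (true,true); (false,true)] [:: (false,true); (true,true); (false,true); (true,false)].
Proof.
apply: beq_sym. apply: beq_trans (beq_ctx [::] [:: (true,false)] rel_braid) _.
exact (beq_ctx [:: (true,true); (false,true)] [::] (rel_cancel (true,true))).
Qed.
Lemma c3 : braid_eq [:: (false,true); (true,true)] [:: (false,true); (true,true); (false,true); (false,false)].
Proof. exact (beq_sym (beq_ctx [:: (false,true); (true,true)] [::] (rel_cancel (false,true)))). Qed.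
Lemma c4 : braid_eq [:: (true,false); (false,false)] [:: (false,false); (true,false); (false,false); (true,true)].
Proof.
have b' : braid_eq [:: (false,false); (true,false); (false,false)] [:: (true,false); (false,false); (true,false)]
  := winv_eq (beq_ctx [::] [::] rel_braid).
apply: beq_sym. apply: beq_trans (beq_congr [::] [:: (true,true)] b') _.
exact (beq_ctx [:: (true,false); (false,false)] [::] (rel_cancel (true,false))).
Qed.

Lemma act0_beq l U : braid_eq (l :: U) (Dpow (act0 l U).1 ++ (act0 l U).2).
Proof.
case: U => [|h U'] /=; first by reflexivity.
case: ifP => [/eqP ->|Hne]; first by exact (cat_proper _ _ (canc' h) U' U' (beq_refl U')).
case: ifP => [_|Ht]; first by reflexivity.
move: Hne Ht; case: l => g s; case: h => g' s'.
case: g; case: s; case: g'; case: s' => //= _ _;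
first [ exact (cat_proper _ _ c1 U' U' (beq_refl U'))
      | exact (cat_proper _ _ c2 U' U' (beq_refl U'))
      | exact (cat_proper _ _ c3 U' U' (beq_refl U'))
      | exact (cat_proper _ _ c4 U' U' (beq_refl U'))
      ].
Qed.

Lemma act0_d l U : let d := (act0 l U).1 in d = 0 \/ d = 1 \/ d = -1.
Proof.
case: U => [|h U'] /=; first by left.
case: ifP => _; first by left. case: ifP => _; first by left.
by case: (l.2); auto.
Qed.

Lemma act_beq l p : braid_eq (l :: ev p) (ev (act l p)).
Proof.
case: p => m U. rewrite /ev /act /=.
rewrite Dpow_swap act0_beq catA.
case: (act0_d (swapn (par m) l) U) => [->|[->|->]].
- have -> : Dpow 0 = [::] by [].
  by rewrite addr0 cats0.
- have -> : Dpow 1 = D by [].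
  by rewrite Dpow_succ.
- have -> : Dpow (-1) = Dinv by [].
  by rewrite Dpow_pred.
Qed.

Lemma nf_beq w : braid_eq w (ev (nf w)).
Proof.
elim: w => [|l w IH]; first by reflexivity.
rewrite /= -act_beq. by rewrite {1}IH.
Qed.

Definition posw (U : word) := all (fun l => ~~ typ l) U.
Definition negw (U : word) := all typ U.
Definition unif (U : word) := posw U || negw U.

Lemma act0_unif l U : unif U -> unif (act0 l U).2.
Proof.
case: U => [|h U'] /=; first by rewrite /unif /posw /negw /=; case: (typ l).
rewrite /unif /posw /negw /=.
case: ifP => _. by case/orP => /andP [_ ->]; rewrite ?orbT.
case: ifP => [/eqP E|Ht] /=. by rewrite E; case: (typ h) => /=; rewrite ?orbF.
move: Ht; case: l => g s; case: h => g' s'.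
by case: g; case: s; case: g'; case: s'.
Qed.

Lemma nf_unif w : unif (nf w).2.
Proof. elim: w => [|l w IH] //=. exact: act0_unif. Qed.
Definition t4 := (int * int * int * int)%type.
Definition mul4 (x y : t4) : t4 :=
  let '(a,b,c,d) := x in let '(e,f,g,h) := y in
  (a*e+b*g, a*f+b*h, c*e+d*g, c*f+d*h).
Definition l4 (l : letter) : t4 :=
  match l with
  | (false,true) => (1,1,0,1)
  | (false,false) => (1,-1,0,1)
  | (true,true) => (1,0,-1,1)
  | (true,false) => (1,0,1,1)
  end.
Definition p4 (w : word) : t4 := foldr (fun l t => mul4 (l4 l) t) (1,0,0,1) w.
Definition M4 (x : t4) : 'M[int]_2 := let '(a,b,c,d) := x in mx2 a b c d.

Lemma mx2_mul a b c d e f g h :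
  mx2 a b c d *m mx2 e f g h = mx2 (a*e+b*g) (a*f+b*h) (c*e+d*g) (c*f+d*h).
Proof.
apply/matrixP => i j; rewrite !mxE !big_ord_recl big_ord0 !mxE addr0 /=.
by case: i => [[|[|//]] Hi]; case: j => [[|[|//]] Hj].
Qed.

Lemma M4_mul x y : M4 x *m M4 y = M4 (mul4 x y).
Proof. case: x => [[[a b] c] d]; case: y => [[[e f] g] h]. exact: mx2_mul. Qed.

Lemma M4_1 : M4 (1,0,0,1) = 1%:M.
Proof.
apply/matrixP => i j; rewrite !mxE.
by case: i => [[|[|//]] Hi]; case: j => [[|[|//]] Hj].
Qed.

Lemma M4_inj x y : M4 x = M4 y -> x = y.
Proof.
case: x => [[[a b] c] d]; case: y => [[[e f] g] h] /= E.
have e00 := congr1 (fun M : 'M[int]_2 => M ord0 ord0) E.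
have e01 := congr1 (fun M : 'M[int]_2 => M ord0 (lift ord0 ord0)) E.
have e10 := congr1 (fun M : 'M[int]_2 => M (lift ord0 ord0) ord0) E.
have e11 := congr1 (fun M : 'M[int]_2 => M (lift ord0 ord0) (lift ord0 ord0)) E.
move: e00 e01 e10 e11; rewrite /= !mxE /=. by move=> -> -> -> ->.
Qed.

Lemma phi_letter4 l : phi_letter l = M4 (l4 l).
Proof. by case: l => [[] []]. Qed.

Lemma phi_p4 w : phi w = M4 (p4 w).
Proof. elim: w => [|l w IH]; first by rewrite M4_1. by rewrite /= IH phi_letter4 M4_mul. Qed.

Lemma phi_cat u v : phi (u ++ v) = phi u *m phi v.
Proof. elim: u => [|l u IH] /=; first by rewrite mul1mx. by rewrite IH mulmxA. Qed.

Lemma p4_cat u v : p4 (u ++ v) = mul4 (p4 u) (p4 v).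
Proof. apply: M4_inj. by rewrite -M4_mul -!phi_p4 phi_cat. Qed.

Lemma testD : p4 [:: s1; s2; s1] = (0,1,-1,0).
Proof. reflexivity. Qed.

Definition good (x : t4) := let '(a,b,c,d) := x in 1 <= a /\ 1 <= d /\ 0 <= b * c.

Lemma posw_inv {U} : posw U ->
  let '(a,b,c,d) := p4 U in 1 <= a /\ 1 <= d /\ 0 <= b /\ 0 <= c /\ (U != [::] -> 1 <= b + c).
Proof.
elim: U => [|l U IH] /=; first by move=> _; lia.
case/andP=> Hl /IH {IH}.
case: (p4 U) => [[[a b] c] d].
by move: Hl; case: l => [[] []] //= _; lia.
Qed.

Lemma negw_inv {U} : negw U ->
  let '(a,b,c,d) := p4 U in 1 <= a /\ 1 <= d /\ b <= 0 /\ c <= 0 /\ (U != [::] -> b + c <= -1).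
Proof.
elim: U => [|l U IH] /=; first by move=> _; lia.
case/andP=> Hl /IH {IH}.
case: (p4 U) => [[[a b] c] d].
by move: Hl; case: l => [[] []] //= _; lia.
Qed.

Lemma unif_good {U} : unif U -> good (p4 U).
Proof.
case/orP => [/posw_inv|/negw_inv]; case: (p4 U) => [[[a b] c] d] /=; nia.
Qed.

Lemma posw_inj U1 U2 : posw U1 -> posw U2 -> p4 U1 = p4 U2 -> U1 = U2.
Proof.
elim: U1 U2 => [|l1 U1 IH] [|l2 U2] //.
- move=> _ H2 E. have := posw_inv H2. rewrite -E /=. lia.
- move=> H1 _ E. have := posw_inv H1. rewrite E /=. lia.
move=> /= /andP[H1 P1] /andP[H2 P2] E.
have I1 := posw_inv P1; have I2 := posw_inv P2.
suff [-> E'] : l1 = l2 /\ p4 U1 = p4 U2 by rewrite (IH U2 P1 P2 E').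
move: E I1 I2 H1 H2 => /=. case: (p4 U1) => [[[a b] c] d]; case: (p4 U2) => [[[a' b'] c'] d'].
case: l1 => [[] []]; case: l2 => [[] []] //= [] E1 E2 E3 E4 I1 I2 _ _;
  first [ split; [done | congr (_,_,_,_); lia] | lia ].
Qed.

Lemma negw_inj U1 U2 : negw U1 -> negw U2 -> p4 U1 = p4 U2 -> U1 = U2.
Proof.
elim: U1 U2 => [|l1 U1 IH] [|l2 U2] //.
- move=> _ H2 E. have := negw_inv H2. rewrite -E /=. lia.
- move=> H1 _ E. have := negw_inv H1. rewrite E /=. lia.
move=> /= /andP[H1 P1] /andP[H2 P2] E.
have I1 := negw_inv P1; have I2 := negw_inv P2.
suff [-> E'] : l1 = l2 /\ p4 U1 = p4 U2 by rewrite (IH U2 P1 P2 E').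
move: E I1 I2 H1 H2 => /=. case: (p4 U1) => [[[a b] c] d]; case: (p4 U2) => [[[a' b'] c'] d'].
case: l1 => [[] []]; case: l2 => [[] []] //= [] E1 E2 E3 E4 I1 I2 _ _;
  first [ split; [done | congr (_,_,_,_); lia] | lia ].
Qed.

Lemma unif_inj {U1 U2} : unif U1 -> unif U2 -> p4 U1 = p4 U2 -> U1 = U2.
Proof.
case/orP=> [P1|N1] /orP [P2|N2] E.
- exact: posw_inj.
- have := posw_inv P1; have := negw_inv N2; rewrite E.
  case: (p4 U2) => [[[a b] c] d] H2 H1.
  case: U1 P1 H1 {E} => [|l1 U1]; case: U2 N2 H2 => [|l2 U2] //= _ H2 _ H1; lia.
- have := negw_inv N1; have := posw_inv P2; rewrite E.
  case: (p4 U2) => [[[a b] c] d] H2 H1.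
  case: U1 N1 H1 {E} => [|l1 U1]; case: U2 P2 H2 => [|l2 U2] //= _ H2 _ H1; lia.
- exact: negw_inj.
Qed.

Definition inXs (x : t4) : bool :=
  [|| x == (1,0,0,1), x == (0,1,-1,0), x == (-1,0,0,-1) | x == (0,-1,1,0)].

Lemma dpw_X A n : (forall x, inXs x -> inXs (mul4 (p4 A) x)) -> inXs (p4 (dpw A n)).
Proof.
move=> HA. elim: n => [|n IH]; first by [].
rewrite /dpw /= -/(dpw A n) p4_cat. exact: HA.
Qed.

Lemma Dpow_X m : inXs (p4 (Dpow m)).
Proof.
case: m => n; apply: dpw_X => x;
by case/or4P => /eqP ->.
Qed.

Lemma key4 {x1 x2 g1 g2} : inXs x1 -> inXs x2 -> good g1 -> good g2 ->
  mul4 x1 g1 = mul4 x2 g2 -> g1 = g2.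
Proof.
case: g1 => [[[a b] c] d]; case: g2 => [[[a' b'] c'] d'] /=.
by case/or4P => /eqP ->; case/or4P => /eqP -> /= G1 G2 [] E1 E2 E3 E4;
  first [ congr (_,_,_,_); lia | nia ].
Qed.

Lemma eps_cat u v : eps (u ++ v) = eps u + eps v.
Proof. by rewrite /eps big_cat. Qed.

Lemma eps_cons l u : eps (l :: u) = (if l.2 then 1 else -1) + eps u.
Proof. by rewrite /eps big_cons. Qed.

Lemma eps_dpw A n : eps (dpw A n) = n%:Z * eps A.
Proof.
elim: n => [|n IH]; first by rewrite /dpw /= /eps big_nil mul0r.
rewrite /dpw /= -/(dpw A n) eps_cat IH. lia.
Qed.

Lemma eps_Dpow m : eps (Dpow m) = 3 * m.
Proof.
have eD : eps D = 3 by rewrite /eps !big_cons big_nil.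
have eDi : eps Dinv = -3 by rewrite /eps /Dinv /word_inv /= !big_cons big_nil.
case: m => n /=; rewrite eps_dpw ?eD ?eDi ?NegzE; lia.
Qed.

Lemma p4_beq {u v} : braid_eq u v -> p4 u = p4 v.
Proof.
elim=> [w|u' v' _ IH|u' v' w _ IH1 _ IH2|a b x y r].
- by [].
- by rewrite IH.
- by rewrite IH1 IH2.
- rewrite !p4_cat. congr (mul4 _ (mul4 _ _)).
  case: r => [l|]; last by [].
  by case: l => [[] []].
Qed.

Lemma eps_beq {u v} : braid_eq u v -> eps u = eps v.
Proof.
elim=> [w|u' v' _ IH|u' v' w _ IH1 _ IH2|a b x y r].
- by [].
- by rewrite IH.
- by rewrite IH1 IH2.
- rewrite !eps_cat. congr (_ + (_ + _)).
  case: r => [l|]; last by rewrite /eps !big_cons big_nil.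
  by case: l => [[] []]; rewrite /eps !big_cons big_nil.
Qed.

Lemma nf_inj {p q} : unif p.2 -> unif q.2 -> p4 (ev p) = p4 (ev q) ->
  eps (ev p) = eps (ev q) -> p = q.
Proof.
case: p => m1 U1; case: q => m2 U2 /= H1 H2.
rewrite /ev /= !p4_cat !eps_cat !eps_Dpow => E F.
have G := key4 (Dpow_X m1) (Dpow_X m2) (unif_good H1) (unif_good H2) E.
have EU := unif_inj H1 H2 G. subst U2.
congr (_, _). lia.
Qed.

Lemma key u v : p4 u = p4 v -> eps u = eps v -> braid_eq u v.
Proof.
move=> P E.
have Hu := nf_beq u; have Hv := nf_beq v.
have := nf_inj (nf_unif u) (nf_unif v).
rewrite -(p4_beq Hu) -(p4_beq Hv) -(eps_beq Hu) -(eps_beq Hv) => /(_ P E) Enf.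
by rewrite Hu Hv Enf.
Qed.

Definition Tpow (k : int) : word :=
  match k with Posz n => nseq n s1 | Negz n => nseq n.+1 (letter_inv s1) end.

Lemma p4_T n : p4 (nseq n s1) = (1, n%:Z, 0, 1).
Proof. elim: n => [|n IH] //=. rewrite IH /=. congr (_,_,_,_); lia. Qed.
Lemma p4_Ti n : p4 (nseq n (letter_inv s1)) = (1, - n%:Z, 0, 1).
Proof. elim: n => [|n IH] //=. rewrite IH /=. congr (_,_,_,_); lia. Qed.
Lemma p4_Tpow k : p4 (Tpow k) = (1, k, 0, 1).
Proof. case: k => n /=; [exact: p4_T | rewrite p4_Ti; congr (_,_,_,_); lia]. Qed.

Lemma surj0 a b d : a * d = 1 -> exists w, p4 w = (a,b,0,d).
Proof.
move=> H. have := intUnitRing.unitzPl H.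
rewrite qualifE /= => /orP [/eqP E|/eqP E]; subst.
- exists (Tpow b). rewrite p4_Tpow. congr (_,_,_,_). lia.
- exists (D ++ D ++ Tpow (-b)). rewrite !p4_cat p4_Tpow /=. congr (_,_,_,_); lia.
Qed.

Lemma surj_n (n : nat) : forall a b c d : int, `|c| <= n%:Z -> a*d - b*c = 1 ->
  exists w, p4 w = (a,b,c,d).
Proof.
elim: n => [|n IH] a b c d Hc Hdet.
  have c0 : c = 0 by lia.
  subst. apply: surj0. lia.
have [c0|Hc0] := eqVneq c 0.
  subst. apply: surj0. lia.
set k := (a %/ c)%Z. set r := (a %% c)%Z.
have ha : a = k * c + r := divz_eq a c.
have r0 : 0 <= r := modz_ge0 a Hc0.
have rlt : r < `|c| := ltz_mod a Hc0.
have [w' Hw'] := IH c d (-r) (-(b - k*d)) ltac:(lia) ltac:(nia).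
exists (Tpow k ++ Dinv ++ w'). rewrite !p4_cat p4_Tpow Hw' /=.
congr (_,_,_,_); nia.
Qed.

Lemma det_p4 w : let '(a,b,c,d) := p4 w in a*d - b*c = 1.
Proof.
elim: w => [|l w IH] //=. move: IH. case: (p4 w) => [[[a b] c] d] IH.
case: l => [[] []] /=; nia.
Qed.

Lemma det_phi w : \det (phi w) = 1.
Proof. rewrite phi_p4. have := det_p4 w. case: (p4 w) => [[[a b] c] d] /=. by rewrite det2. Qed.

Lemma M4_entries (P : 'M[int]_2) :
  P = M4 (P ord0 ord0, P ord0 (lift ord0 ord0), P (lift ord0 ord0) ord0, P (lift ord0 ord0) (lift ord0 ord0)).
Proof.
apply/matrixP => i j; rewrite /= !mxE.
case: i => [[|[|//]] Hi]; case: j => [[|[|//]] Hj] /=;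
by congr (P _ _); apply: val_inj.
Qed.

Lemma phi_inv w : phi (word_inv w) *m phi w = 1%:M.
Proof.
rewrite -phi_cat !phi_p4 (p4_beq (wcanc' w)). exact: M4_1.
Qed.
Lemma phi_inv' w : phi w *m phi (word_inv w) = 1%:M.
Proof.
rewrite -phi_cat !phi_p4 (p4_beq (wcanc w)). exact: M4_1.
Qed.
Lemma eps_inv w : eps (word_inv w) = - eps w.
Proof.
have := eps_beq (wcanc' w). rewrite eps_cat /eps big_nil. lia.
Qed.

Theorem proposition2p5 (g h : word) :
  braid_conj g h <-> (SL2Z_conj (phi g) (phi h) /\ eps g = eps h).
Proof.
split.
- case=> w Hw.
  have Ph : phi h = phi (w ++ g ++ word_inv w) by rewrite !phi_p4 (p4_beq Hw).
  have Eh : eps h = eps (w ++ g ++ word_inv w) by rewrite (eps_beq Hw).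
  split; last by rewrite Eh !eps_cat eps_inv; lia.
  exists (phi w); split; first exact: det_phi.
  by rewrite Ph !phi_cat !mulmxA -[_ *m phi (word_inv w) *m phi w]mulmxA phi_inv mulmx1.
- case=> [[P [dP HP]] He].
  have := dP. rewrite [P]M4_entries /= det2.
  move=> Hd.
  have Hc : `|P (lift ord0 ord0) ord0| <= (`|P (lift ord0 ord0) ord0|%N)%:Z by rewrite abszE.
  have [w Hw] := surj_n _ _ _ _ _ Hc Hd.
  have EP : phi w = P by rewrite phi_p4 Hw [RHS]M4_entries.
  exists w. apply: key.
  + apply: M4_inj. rewrite -!phi_p4 !phi_cat EP mulmxA HP -mulmxA -EP phi_inv' mulmx1. by [].
  + by rewrite !eps_cat eps_inv He; lia.
Qed.
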